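(* Let $U$ be a finite nonempty set, $(T,I,N)$ a residual triplet, $\widetilde{R}$ a $T$-preorder relation on $U$, $A$ a fuzzy set on $U$, and $L:\mathbb{R}\times\mathbb{R}\to\mathbb{R}^+$ a loss function of $\lor$-type. Let $\hat{A}:U\to[0,1]$ be an optimal solution of the problem $$\text{minimize }\sum_{u\in U}L(A(u),\hat{A}(u))\quad\text{subject to } T(\widetilde{R}(u,v),\hat{A}(v))\le\hat{A}(u)\ (u,v\in U),\quad 0\le\hat{A}(u)\le1\ (u\in U).$$ Define $U^-=\{u\in U;\hat{A}(u)<A(u)\}$, $U^0=\{u\in U;\hat{A}(u)=A(u)\}$, $U^+=\{u\in U;\hat{A}(u)>A(u)\}$. Then $$\hat{A}(u)=\max\{T(\widetilde{R}(u,v),\hat{A}(v)); v\in U^-\cup U^0\}\quad\text{for every } u\in U^+,$$ and $$\hat{A}(u)=\min\{I(\widetilde{R}(v,u),\hat{A}(v)); v\in U^+\cup U^0\}\quad\text{for every } u\in U^-.$$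
   Context: A residual triplet $(T,I,N)$ consists of a left-continuous $t$-norm $T$, its residual implicator $I(x,y)=\sup\{\beta\in[0,1]: T(x,\beta)\le y\}$ and $N(x)=I(x,0)$. $\widetilde{R}:U\times U\to[0,1]$ is a $T$-preorder if reflexive and $T$-transitive ($T(\widetilde{R}(u,v),\widetilde{R}(v,w))\le\widetilde{R}(u,w)$). A fuzzy set on $U$ is a map $U\to[0,1]$. A loss function $L$ is of $\lor$-type if for every real $a$: $L(a,a)=0$; the functions $x\mapsto L(x,a)$ and $x\mapsto L(a,x)$ are increasing for $x>a$; and these functions are decreasing for $x<a$. *)

(* Defs.v *)
From HB Require Import structures.
From mathcomp Require Import all_boot all_order all_algebra.
From mathcomp Require Import classical_sets reals.
Set Implicit Arguments. Unset Strict Implicit. Unset Printing Implicit Defensive.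
Import Order.TTheory GRing.Theory Num.Theory.
Local Open Scope ring_scope.
Local Open Scope classical_set_scope.

Section Defs.
Variable R : realType.

Definition in01 (x : R) : Prop := 0 <= x <= 1.

Definition is_tnorm (T : R -> R -> R) : Prop :=
  [/\ (forall x y, in01 x -> in01 y -> in01 (T x y)),
      (forall x y, in01 x -> in01 y -> T x y = T y x),
      (forall x y z, in01 x -> in01 y -> in01 z -> T x (T y z) = T (T x y) z),
      (forall x y z, in01 x -> in01 y -> in01 z -> y <= z -> T x y <= T x z)
    & (forall x, in01 x -> T x 1 = x)].

Definition left_continuous_tnorm (T : R -> R -> R) : Prop :=
  forall x y, in01 x -> in01 y -> 0 < x ->
    forall e, 0 < e -> exists2 d, 0 < d &
      forall z, 0 <= z -> x - d < z -> z <= x -> `|T z y - T x y| < e.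

Definition is_lc_tnorm (T : R -> R -> R) : Prop :=
  is_tnorm T /\ left_continuous_tnorm T.

Definition residual (T : R -> R -> R) (x y : R) : R :=
  sup [set b : R | in01 b /\ T x b <= y].

Variable U : finType.

Definition T_preorder (T : R -> R -> R) (Rt : U -> U -> R) : Prop :=
  [/\ (forall u v, in01 (Rt u v)),
      (forall u, Rt u u = 1)
    & (forall u v w, T (Rt u v) (Rt v w) <= Rt u w)].

Definition fuzzy_set (A : U -> R) : Prop := forall u, in01 (A u).

Definition vee_type_loss (L : R -> R -> R) : Prop :=
  [/\ (forall x y, 0 <= L x y),
      (forall a, L a a = 0),
      (forall a x y, a < x -> x < y -> L x a < L y a /\ L a x < L a y)
    & (forall a x y, x < y -> y < a -> L y a < L x a /\ L a y < L a x)].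

Definition feasible (T : R -> R -> R) (Rt : U -> U -> R) (B : U -> R) : Prop :=
  (forall u v, T (Rt u v) (B v) <= B u) /\ (forall u, in01 (B u)).

Definition total_loss (L : R -> R -> R) (A B : U -> R) : R :=
  \sum_(u : U) L (A u) (B u).

Definition optimal_solution (T : R -> R -> R) (Rt : U -> U -> R)
    (L : R -> R -> R) (A Ah : U -> R) : Prop :=
  feasible T Rt Ah /\
  forall B, feasible T Rt B -> total_loss L A Ah <= total_loss L A B.

End Defs.

(* Main.v *)
Require Import Defs.
From HB Require Import structures.
From mathcomp Require Import all_boot all_order all_algebra.
From mathcomp Require Import classical_sets reals.
From mathcomp Require Import lra zify.
Import Order.TTheory GRing.Theory Num.Theory.
Local Open Scope ring_scope.
Set Implicit Arguments.
Local Open Scope classical_set_scope.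

Lemma in01_1 (R : realType) : in01 (1 : R).
Proof. by rewrite /in01 ler01 lexx. Qed.

Lemma in01_0 (R : realType) : in01 (0 : R).
Proof. by rewrite /in01 lexx ler01. Qed.

Lemma T_in01 (R : realType) (T : R -> R -> R) : is_tnorm T ->
  forall x y, in01 x -> in01 y -> in01 (T x y).
Proof. by case. Qed.

Lemma T_comm (R : realType) (T : R -> R -> R) : is_tnorm T ->
  forall x y, in01 x -> in01 y -> T x y = T y x.
Proof. by case. Qed.

Lemma T_assoc (R : realType) (T : R -> R -> R) : is_tnorm T ->
  forall x y z, in01 x -> in01 y -> in01 z -> T x (T y z) = T (T x y) z.
Proof. by case. Qed.

Lemma T_mono2 (R : realType) (T : R -> R -> R) : is_tnorm T ->
  forall x y z, in01 x -> in01 y -> in01 z -> y <= z -> T x y <= T x z.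
Proof. by case. Qed.

Lemma T_mono1 (R : realType) (T : R -> R -> R) : is_tnorm T ->
  forall x y z, in01 x -> in01 y -> in01 z -> x <= y -> T x z <= T y z.
Proof.
move=> hT x y z hx hy hz le; rewrite (T_comm hT hx hz) (T_comm hT hy hz).
exact: T_mono2.
Qed.

Lemma T_1l (R : realType) (T : R -> R -> R) : is_tnorm T ->
  forall x, in01 x -> T 1 x = x.
Proof.
move=> hT x hx; rewrite (T_comm hT (in01_1 R) hx); by case: hT => _ _ _ _ ->.
Qed.

Lemma T_le_r (R : realType) (T : R -> R -> R) : is_tnorm T ->
  forall x y, in01 x -> in01 y -> T x y <= y.
Proof.
move=> hT x y hx hy; rewrite -{2}(T_1l hT hy).
apply: T_mono1 => //; first exact: in01_1. by case/andP: hx.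
Qed.

Lemma res_ub (R : realType) (T : R -> R -> R) x y :
  has_ubound [set b : R | in01 b /\ T x b <= y].
Proof. by exists 1 => b [/andP[_ ->]]. Qed.

Lemma res_ne (R : realType) (T : R -> R -> R) : is_tnorm T ->
  forall x y, in01 x -> in01 y -> [set b : R | in01 b /\ T x b <= y] !=set0.
Proof.
move=> hT x y hx hy; exists 0; split; first exact: in01_0.
apply: le_trans (T_le_r hT hx (in01_0 R)) _; by case/andP: hy.
Qed.

Lemma res_ge (R : realType) (T : R -> R -> R) : is_tnorm T ->
  forall x y b, in01 x -> in01 y -> in01 b -> T x b <= y -> b <= residual T x y.
Proof. move=> hT x y b hx hy hb h; rewrite /residual; by apply: (ub_le_sup (@res_ub _ T x y)). Qed.

Lemma res_in01 (R : realType) (T : R -> R -> R) : is_tnorm T ->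
  forall x y, in01 x -> in01 y -> in01 (residual T x y).
Proof.
move=> hT x y hx hy; apply/andP; split.
  apply: res_ge => //; first exact: in01_0.
  apply: le_trans (T_le_r hT hx (in01_0 R)) _; by case/andP: hy.
by apply: ge_sup; [exact: res_ne | move=> b [/andP[_ ->]]].
Qed.

Lemma res_T (R : realType) (T : R -> R -> R) : is_lc_tnorm T ->
  forall x y, in01 x -> in01 y -> T x (residual T x y) <= y.
Proof.
case=> hT hlc x y hx hy.
have hs := res_in01 hT hx hy.
set s := residual T x y in hs *.
have [s0|sgt0] := eqVneq s 0.
  rewrite s0; apply: le_trans (T_le_r hT hx (in01_0 R)) _; by case/andP: hy.
have s_pos : 0 < s by rewrite lt_def sgt0; case/andP: hs.
rewrite leNgt; apply/negP => hlt.
have e_pos : 0 < T x s - y by rewrite subr_gt0.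
have [d d_pos hd] := hlc s x hs hx s_pos _ e_pos.
have hsup : has_sup [set b : R | in01 b /\ T x b <= y].
  by split; [exact: res_ne | exact: res_ub].
have [b [hb hbT] hbd] := sup_adherent d_pos hsup.
have bles : b <= s by rewrite /s /residual; apply: (ub_le_sup (@res_ub _ T x y)).
have := hd b _ hbd bles.
case/andP: (hb) => hb0 _.
move=> /(_ hb0).
rewrite (T_comm hT hb hx) (T_comm hT hs hx) => habs.
have : T x s - T x b <= `|T x b - T x s| by rewrite distrC ler_norm.
move: habs hbT; rewrite -/s; lra.
Qed.

Lemma loss_up (R : realType) (L : R -> R -> R) : vee_type_loss L ->
  forall a x y, a <= x -> x < y -> L a x < L a y.
Proof.
case=> h0 haa hup _ a x y hax hxy.
have [ea|lt] := eqVneq a x.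
  rewrite -ea haa; rewrite -ea in hxy.
  have [m1 m2] := midf_lt hxy.
  have := (hup a _ _ m1 m2).2.
  have := h0 a ((a + y) / 2). lra.
have ax : a < x by rewrite lt_def eq_sym lt hax.
exact: (hup a x y ax hxy).2.
Qed.

Lemma loss_down (R : realType) (L : R -> R -> R) : vee_type_loss L ->
  forall a x y, x <= a -> y < x -> L a x < L a y.
Proof.
case=> h0 haa _ hdn a x y hxa hyx.
have [ea|lt] := eqVneq x a.
  rewrite ea haa; rewrite ea in hyx.
  have [m1 m2] := midf_lt hyx.
  have := (hdn a _ _ m1 m2).2.
  have := h0 a ((y + a) / 2). lra.
have xa : x < a by rewrite lt_def eq_sym lt hxa.
exact: (hdn a y x hyx xa).2.
Qed.

Lemma opt_eq (R : realType) (U : finType) (T : R -> R -> R) (Rt : U -> U -> R)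
  (L : R -> R -> R) (A Ah B : U -> R) :
  optimal_solution T Rt L A Ah -> feasible T Rt B ->
  (forall w, L (A w) (B w) <= L (A w) (Ah w)) ->
  forall w, ~ (L (A w) (B w) < L (A w) (Ah w)).
Proof.
case=> _ hopt hB hle w hlt.
have := hopt B hB; rewrite /total_loss (bigD1 w) //= [X in _ <= X](bigD1 w) //=.
apply/negP; rewrite -ltNge.
apply: ltr_leD => //; apply: ler_sum => i _; exact: hle.
Qed.

Lemma part1 (R : realType) (U : finType) (T : R -> R -> R)
    (Rt : U -> U -> R) (A : U -> R) (L : R -> R -> R) (Ah : U -> R) :
  is_lc_tnorm T -> T_preorder T Rt -> fuzzy_set A -> vee_type_loss L ->
  optimal_solution T Rt L A Ah ->
  forall u, A u < Ah u -> exists2 v, Ah v <= A v & Ah u = T (Rt u v) (Ah v).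
Proof.
move=> [hT hlc] [R01 Rrefl Rtr] hA hL hopt.
have [[hfeas hAh01] _] := hopt.
have Tin : forall x y, in01 x -> in01 y -> in01 (T x y) := T_in01 hT.
pose E w := if Ah w <= A w then Ah w else A w.
have E01 : forall w, in01 (E w) by move=> w; rewrite /E; case: ifP.
have EleAh : forall w, E w <= Ah w.
  by move=> w; rewrite /E; case: ifP => // /negbT; rewrite -ltNge => /ltW.
pose F w v := T (Rt w v) (E v).
pose D w := F w (Order.arg_max w predT (F w)).
have FleD : forall w v, F w v <= D w.
  by move=> w v; rewrite /D; case: arg_maxP => //= i _; apply.
have D01 : forall w, in01 (D w) by move=> w; rewrite /D /F; auto.
have Dfeas : feasible T Rt D.
  split => // w x; rewrite {1}/D /F.
  rewrite (T_assoc hT); try by auto.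
  apply: le_trans (FleD w (Order.arg_max x predT (F x))).
  apply: (T_mono1 hT); try by auto.
have ElD : forall w, E w <= D w.
  move=> w; apply: le_trans (FleD w w); rewrite /F Rrefl (T_1l hT); auto.
have DleAh : forall w, D w <= Ah w.
  move=> w; rewrite /D /F; apply: le_trans (hfeas _ _).
  apply: (T_mono2 hT); auto.
have AleD : forall w, A w < Ah w -> A w <= D w.
  move=> w hw; apply: le_trans (ElD w); by rewrite /E (leNgt (Ah w)) hw.
have Lle : forall w, L (A w) (D w) <= L (A w) (Ah w).
  move=> w; have [e|ne] := eqVneq (D w) (Ah w); first by rewrite e.
  have hlt : D w < Ah w by rewrite lt_def eq_sym ne DleAh.
  case: (leP (Ah w) (A w)) => h.
    have : Ah w <= D w by apply: le_trans (ElD w); rewrite /E h.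
    by rewrite leNgt hlt.
  by apply/ltW/(loss_up hL); auto.
have DeqAh : forall w, A w < Ah w -> D w = Ah w.
  move=> w hw; apply/eqP; rewrite eq_le DleAh /= leNgt; apply/negP => hlt.
  by apply: (opt_eq hopt Dfeas Lle w); apply: (loss_up hL); auto.
have key : forall n u, (#|[pred w | (Ah u < Ah w)%R]| < n)%N -> A u < Ah u ->
    exists2 v, Ah v <= A v & Ah u = T (Rt u v) (Ah v).
  elim=> [//|n IH] u hn hu.
  have hDu := DeqAh u hu.
  rewrite /D in hDu.
  set v := Order.arg_max u predT (F u) in hDu.
  have hv : Ah u = T (Rt u v) (E v) by rewrite -hDu.
  case: (leP (Ah v) (A v)) => hvA.
    by exists v => //; rewrite hv /E hvA.
  have Ev : E v = A v by rewrite /E leNgt hvA.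
  have huv : Ah u < Ah v.
    apply: le_lt_trans hvA; rewrite hv Ev; apply: (T_le_r hT); auto.
  have hcard : (#|[pred w | (Ah v < Ah w)%R]| < n)%N.
    have : [pred w | Ah v < Ah w] \proper [pred w | Ah u < Ah w].
      apply/properP; split.
        by apply/fintype.subsetP => w; rewrite !inE => /(lt_trans huv).
      by exists v; rewrite !inE ?ltxx.
    by move=> /proper_card h; apply: (leq_trans h); rewrite -ltnS.
  have [v' hv'A hv'] := IH v hcard hvA.
  exists v' => //; apply/le_anti/andP; split; last exact: hfeas.
  rewrite {1}hv Ev.
  apply: le_trans (T_mono2 hT _ _ _ (ltW hvA)) _; try by auto.
  rewrite {1}hv' (T_assoc hT); try by auto.
  apply: (T_mono1 hT); try by auto.
move=> u hu; exact: key _ u (ltnSn _) hu.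
Qed.

Lemma part2 (R : realType) (U : finType) (T : R -> R -> R)
    (Rt : U -> U -> R) (A : U -> R) (L : R -> R -> R) (Ah : U -> R) :
  is_lc_tnorm T -> T_preorder T Rt -> fuzzy_set A -> vee_type_loss L ->
  optimal_solution T Rt L A Ah ->
  forall u, Ah u < A u -> exists2 v, A v <= Ah v & Ah u = residual T (Rt v u) (Ah v).
Proof.
move=> hTl [R01 Rrefl Rtr] hA hL hopt.
have [hT hlc] := hTl.
have [[hfeas hAh01] _] := hopt.
have Tin : forall x y, in01 x -> in01 y -> in01 (T x y) := T_in01 hT.
have Iin : forall x y, in01 x -> in01 y -> in01 (residual T x y) := res_in01 hT.
have i1 := in01_1 R.
pose E w := if A w <= Ah w then Ah w else A w.
have E01 : forall w, in01 (E w) by move=> w; rewrite /E; case: ifP.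
have AhleE : forall w, Ah w <= E w.
  by move=> w; rewrite /E; case: ifP => // /negbT; rewrite -ltNge => /ltW.
pose F w v := residual T (Rt v w) (E v).
pose D w := F w (Order.arg_min w predT (F w)).
have DleF : forall w v, D w <= F w v.
  by move=> w v; rewrite /D; case: arg_minP => //= i _; apply.
have D01 : forall w, in01 (D w) by move=> w; rewrite /D /F; auto.
have Dfeas : feasible T Rt D.
  split => // w x; rewrite {2}/D /F.
  set v := Order.arg_min w predT (F w).
  apply: (res_ge hT); try by auto.
  rewrite (T_assoc hT); try by auto.
  apply: le_trans (T_mono1 hT _ _ _ (Rtr v w x)) _; try by auto.
  apply: le_trans (T_mono2 hT (R01 v x) (D01 x) (Iin _ _ (R01 v x) (E01 v)) (DleF x v)) _.
  rewrite /F; apply: (res_T hTl); auto.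
have DlE : forall w, D w <= E w.
  move=> w; apply: le_trans (DleF w w) _; rewrite /F Rrefl.
  have h := res_T hTl (in01_1 R) (E01 w); rewrite (T_1l hT) in h; try by auto.
have AhleD : forall w, Ah w <= D w.
  move=> w; rewrite /D /F; apply: (res_ge hT); try by auto.
  apply: le_trans (hfeas _ _) (AhleE _).
have DleA : forall w, Ah w < A w -> D w <= A w.
  move=> w hw; apply: le_trans (DlE w) _; by rewrite /E (leNgt (A w)) hw.
have Lle : forall w, L (A w) (D w) <= L (A w) (Ah w).
  move=> w; have [e|ne] := eqVneq (D w) (Ah w); first by rewrite e.
  have hlt : Ah w < D w by rewrite lt_def ne AhleD.
  case: (leP (A w) (Ah w)) => h.
    have : D w <= Ah w by apply: le_trans (DlE w) _; rewrite /E h.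
    by rewrite leNgt hlt.
  by apply/ltW/(loss_down hL); auto.
have DeqAh : forall w, Ah w < A w -> D w = Ah w.
  move=> w hw; apply/eqP; rewrite eq_le AhleD andbT leNgt; apply/negP => hlt.
  by apply: (opt_eq hopt Dfeas Lle w); apply: (loss_down hL); auto.
have key : forall n u, (#|[pred w | (Ah w < Ah u)%R]| < n)%N -> Ah u < A u ->
    exists2 v, A v <= Ah v & Ah u = residual T (Rt v u) (Ah v).
  elim=> [//|n IH] u hn hu.
  have hDu := DeqAh u hu.
  rewrite /D in hDu.
  set v := Order.arg_min u predT (F u) in hDu.
  have hv : Ah u = residual T (Rt v u) (E v) by rewrite -hDu.
  case: (leP (A v) (Ah v)) => hvA.
    by exists v => //; rewrite hv /E hvA.
  have Ev : E v = A v by rewrite /E leNgt hvA.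
  have huv : Ah v < Ah u.
    apply: lt_le_trans hvA _; rewrite hv Ev; apply: (res_ge hT); try by auto.
    apply: (T_le_r hT); auto.
  have hcard : (#|[pred w | (Ah w < Ah v)%R]| < n)%N.
    have : [pred w | Ah w < Ah v] \proper [pred w | Ah w < Ah u].
      apply/properP; split.
        by apply/fintype.subsetP => w; rewrite !inE => /lt_trans; apply.
      by exists v; rewrite !inE ?ltxx.
    by move=> /proper_card h; apply: (leq_trans h); rewrite -ltnS.
  have [v' hv'A hv'] := IH v hcard hvA.
  exists v' => //; apply/le_anti/andP; split.
    by apply: (res_ge hT); auto.
    set z := residual T (Rt v' u) (Ah v').
    have z01 : in01 z by rewrite /z; auto.
    rewrite hv Ev; apply: (res_ge hT); try by auto.
    apply: (le_trans _ (ltW hvA)); rewrite hv'.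
    apply: (res_ge hT); try by auto.
    rewrite (T_assoc hT); try by auto.
    apply: le_trans (T_mono1 hT _ _ _ (Rtr v' v u)) _; try by auto.
    apply: (res_T hTl); auto.
move=> u hu; exact: key _ u (ltnSn _) hu.
Qed.

Unset Implicit Arguments.

Theorem theorem1 (R : realType) (U : finType) (T : R -> R -> R)
    (Rt : U -> U -> R) (A : U -> R) (L : R -> R -> R) (Ah : U -> R) :
  (0 < #|U|)%N ->
  is_lc_tnorm T ->
  T_preorder T Rt ->
  fuzzy_set A ->
  vee_type_loss L ->
  optimal_solution T Rt L A Ah ->
  (forall u, A u < Ah u ->
     (exists2 v, Ah v <= A v & Ah u = T (Rt u v) (Ah v)) /\
     (forall v, Ah v <= A v -> T (Rt u v) (Ah v) <= Ah u)) /\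
  (forall u, Ah u < A u ->
     (exists2 v, A v <= Ah v & Ah u = residual T (Rt v u) (Ah v)) /\
     (forall v, A v <= Ah v -> Ah u <= residual T (Rt v u) (Ah v))).
Proof.
move=> _ hTl hR hA hL hopt.
have [[hfeas hAh01] _] := hopt.
have [hT _] := hTl.
have [R01 _ _] := hR.
split=> u hu; split.
- exact: (@part1 _ _ _ _ _ _ _ hTl hR hA hL hopt u hu).
- by move=> v _; apply: hfeas.
- exact: (@part2 _ _ _ _ _ _ _ hTl hR hA hL hopt u hu).
- by move=> v _; apply: (res_ge hT) => //; apply: hfeas.
Qed.
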